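(* Let $A$ be a general metric space and $M$ a left module on $A$. Then for every $x\in A$, $$M(x)\ \le\ \sup_{\epsilon>0}\ \inf\{A(x,y): y\in A,\ M(y)\le\epsilon\}.$$ If moreover $M$ is $\mathcal P_1$-flat, this is an equality for every $x$, i.e. $M=M^-(\mathcal F(M))$.
   Context: $[0,\infty]$ with $+$ ($x+\infty=\infty$), internal hom $[x,y]=\max(y-x,0)$ for finite $x,y$, $[x,\infty]=\infty$ for $x<\infty$, $[\infty,y]=0$; $\inf\emptyset=\infty$, $\sup\emptyset=0$. A general metric space $A$ is a set with $A(-,-):A\times A\to[0,\infty]$, $A(x,x)=0$, $A(x,z)\le A(x,y)+A(y,z)$. A left module is $M:A\to[0,\infty]$ with $M(x)\le M(y)+A(x,y)$; a right module is $N:A\to[0,\infty]$ with $N(y)\le A(x,y)+N(x)$. A left module $M$ is $\mathcal P_1$-flat iff $\inf_xM(x)=0$ and for every $v\in[0,\infty]$ and every right module $N$, $\inf_x(M(x)+[v,N(x)])=[v,\inf_x(M(x)+N(x))]$. $\mathcal F(M)$ is the set of subsets of $A$ containing some $\{y:M(y)\le\epsilon\}$, $\epsilon>0$, and for a filter $\mathcal F$, $M^-(\mathcal F)(x)=\sup_{f\in\mathcal F}\inf_{y\in f}A(x,y)$. *)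

(* Defs.v *)
(* [0,oo] is modelled inside \bar R (R : realType)
   by requiring all values to be nonnegative. *)
From mathcomp Require Import all_boot all_order all_algebra.
From mathcomp Require Import all_classical all_reals.
From mathcomp Require Import ereal.
Set Implicit Arguments. Unset Strict Implicit. Unset Printing Implicit Defensive.
Import Order.TTheory GRing.Theory Num.Theory.
Local Open Scope classical_set_scope.
Local Open Scope ereal_scope.

Section Defs.
Variable R : realType.

Definition gen_metric (A : Type) (d : A -> A -> \bar R) : Prop :=
  [/\ (forall x y, 0 <= d x y), (forall x, d x x = 0) &
      (forall x y z, d x z <= d x y + d y z)].

Definition left_module (A : Type) (d : A -> A -> \bar R) (M : A -> \bar R) : Prop :=
  (forall x, 0 <= M x) /\ (forall x y, M x <= M y + d x y).

Definition right_module (A : Type) (d : A -> A -> \bar R) (N : A -> \bar R) : Prop :=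
  (forall x, 0 <= N x) /\ (forall x y, N y <= d x y + N x).

(* internal hom [x,y] of [0,oo] (only used on nonnegative values) *)
Definition ehom (v w : \bar R) : \bar R :=
  match v, w with
  | +oo, _ => 0
  | _, +oo => +oo
  | r%:E, s%:E => (Num.max (s - r) 0)%R%:E
  | _, _ => 0
  end.

Definition P1_flat (A : Type) (d : A -> A -> \bar R) (M : A -> \bar R) : Prop :=
  ereal_inf (range M) = 0 /\
  forall (v : \bar R), 0 <= v -> forall N : A -> \bar R, right_module d N ->
    ereal_inf [set M x + ehom v (N x) | x in [set: A]] =
    ehom v (ereal_inf [set M x + N x | x in [set: A]]).

Definition filter_of (A : Type) (M : A -> \bar R) : set (set A) :=
  [set f | exists2 e : R, (0 < e)%R & [set y | M y <= e%:E] `<=` f].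

Definition Mminus (A : Type) (d : A -> A -> \bar R) (F : set (set A)) (x : A) : \bar R :=
  ereal_sup [set ereal_inf [set d x y | y in f] | f in F].

Definition sup_inf_bound (A : Type) (d : A -> A -> \bar R) (M : A -> \bar R) (x : A) : \bar R :=
  ereal_sup [set ereal_inf [set d x y | y in [set y | M y <= e%:E]] | e in [set e : R | (0 < e)%R]].

End Defs.

(* Main.v *)
Require Import Defs.
From mathcomp Require Import all_boot all_order all_algebra.
From mathcomp Require Import all_classical all_reals.
From mathcomp Require Import ereal.
From mathcomp Require Import lra.
Import Order.TTheory GRing.Theory Num.Theory.
Local Open Scope classical_set_scope.
Local Open Scope ereal_scope.

Theorem mainTheorem11 (R : realType) (A : Type) (d : A -> A -> \bar R)
  (M : A -> \bar R) :
  gen_metric d -> left_module d M ->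
  (forall x, M x <= sup_inf_bound d M x) /\
  (P1_flat d M ->
     (forall x, M x = sup_inf_bound d M x) /\ M = Mminus d (filter_of M)).
Proof.
move=> [d0 dxx dtri] [M0 Mmod].
have part1 : forall x, M x <= sup_inf_bound d M x.
  move=> x; apply/lee_addgt0Pr => e e0.
  have IleS : ereal_inf [set d x y | y in [set y | M y <= e%:E]]
      <= sup_inf_bound d M x.
    by apply: ereal_sup_ubound; exists e.
  apply: le_trans (leeD2r _ IleS).
  case E: (ereal_inf [set d x y | y in [set y | M y <= e%:E]]) => [s| |].
  - apply/lee_addgt0Pr => t t0.
    have : ereal_inf [set d x y | y in [set y | M y <= e%:E]] < (s + t)%:E.
      by rewrite E lte_fin ltrDl.
    case/ereal_inf_lt => _ [y My <-] dlt.
    apply: (le_trans (Mmod x y)); apply: le_trans (leeD My (ltW dlt)) _.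
    by rewrite -!EFinD lee_fin; lra.
  - by rewrite /= leey.
  - have : 0 <= ereal_inf [set d x y | y in [set y | M y <= e%:E]].
      by apply: le_ereal_inf_tmp => _ [y _ <-]; apply: d0.
    by rewrite E.
have mm : forall x, Mminus d (filter_of M) x = sup_inf_bound d M x.
  move=> x; apply/le_anti/andP; split.
  - apply: ge_ereal_sup => _ [f [e e0 sub] <-].
    apply: (@le_trans _ _ (ereal_inf [set d x y | y in [set y | M y <= e%:E]])).
      by apply: ereal_inf_le_tmp; apply: image_subset.
    by apply: ereal_sup_ubound; exists e.
  - apply: ge_ereal_sup => _ [e e0 <-]; apply: ereal_sup_ubound.
    by exists [set y | M y <= e%:E] => //; exists e.
split => // [[_ flat]].
have part2 : forall x, M x = sup_inf_bound d M x.
  move=> x; apply/le_anti/andP; split; first exact: part1.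
  apply: ge_ereal_sup => _ [e e0 <-].
  case Ex: (M x) => [r| |]; last by have := M0 x; rewrite Ex.
    2: by rewrite leey.
  apply/lee_addgt0Pr => t t0.
  have rmod : right_module d (d x).
    by split => // z y; rewrite addeC; apply: dtri.
  have := flat (M x) (M0 x) (d x) rmod.
  have Hinf : ereal_inf [set M y + d x y | y in [set: A]] = r%:E.
    apply/le_anti/andP; split.
    - by apply: ge_ereal_inf; exists (M x + d x x) => //; rewrite dxx adde0 Ex.
    - by apply: le_ereal_inf_tmp => _ [y _ <-]; rewrite -Ex; apply: Mmod.
  rewrite Hinf Ex /= subrr maxxx => H.
  have : ereal_inf [set M y + ehom r%:E (d x y) | y in [set: A]]
      < (Num.min e t)%:E by rewrite H lte_fin lt_min e0 t0.
  case/ereal_inf_lt => _ [y _ <-].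
  have := M0 y; have := d0 x y.
  case Emy: (M y) => [my| |] //; case Ed: (d x y) => [s| |] // s0 my0 //=.
  rewrite -EFinD lte_fin => lt.
  rewrite lee_fin in s0.
  have {}my0 : (0 <= my)%R by rewrite -lee_fin.
  have h1 : (s - r <= Num.max (s - r) 0)%R by rewrite le_max lexx.
  have h0 : (0 <= Num.max (s - r) 0)%R by rewrite le_max lexx orbT.
  have h2 : (Num.min e t <= t)%R by rewrite ge_min lexx orbT.
  have h3 : (Num.min e t <= e)%R by rewrite ge_min lexx.
  apply: ge_ereal_inf; exists s%:E.
    by exists y => //=; rewrite Emy lee_fin; lra.
  rewrite -EFinD lee_fin. lra.
split => //; apply: boolp.funext => x; by rewrite mm part2.
Qed.
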